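(* Let $A,B\in \mathbb{R}^{m\times n}$ with $m<n$ and let $1\le p\le\infty$. If $A$ has full row rank and $\|A^\dagger B\|_p<1$, then for any given $b\in\mathbb{R}^m$ the equation $x=A^\dagger(B|x|+b)$ in $x\in\mathbb{R}^n$ has a unique solution, and that solution also satisfies the generalized absolute value equation $Ax-B|x|=b$.
   Context: $A^\dagger$ denotes the Moore–Penrose inverse of $A$. $|x|$ denotes the entrywise absolute value. $\|\cdot\|_p$ on matrices denotes the operator norm induced by the vector $p$-norm. *)

(* Defs.v *)
From HB Require Import structures.
From mathcomp Require Import all_boot all_order all_algebra.
From mathcomp Require Import all_classical all_reals.
From mathcomp Require Import exp.
Set Implicit Arguments. Unset Strict Implicit. Unset Printing Implicit Defensive.
Import Order.TTheory GRing.Theory Num.Theory.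
Local Open Scope ring_scope.

Definition is_MP_inverse (R : realType) (m n : nat)
    (A : 'M[R]_(m, n)) (X : 'M[R]_(n, m)) : Prop :=
  [/\ A *m X *m A = A, X *m A *m X = X, (A *m X)^T = A *m X & (X *m A)^T = X *m A].

Definition absv (R : realType) (n : nat) (x : 'cV[R]_n) : 'cV[R]_n :=
  map_mx (fun t => `|t|) x.

Definition vpnorm (R : realType) (p : \bar R) (n : nat) (x : 'cV[R]_n) : R :=
  match p with
  | r%:E => powR (\sum_(i < n) powR `|x i 0| r) r^-1
  | +oo%E => \big[Num.max/0]_(i < n) `|x i 0|
  | -oo%E => 0
  end.

Definition opnorm (R : realType) (p : \bar R) (k n : nat) (M : 'M[R]_(k, n)) : R :=
  sup [set vpnorm p (M *m x) / vpnorm p x | x in [set x : 'cV[R]_n | x != 0]]%classic.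

(* Main.v *)
Require Import Defs.
From HB Require Import structures.
From mathcomp Require Import all_boot all_order all_algebra.
From mathcomp Require Import all_classical all_reals all_analysis.
Import Order.TTheory GRing.Theory Num.Theory.
Local Open Scope ring_scope.
From mathcomp Require Import lra.
Import numFieldNormedType.Exports.

Definition cmx (R : realType) m n := 'M[R]_(m, n).
HB.instance Definition _ (R : realType) m n := NormedModule.on (cmx R m n).
HB.instance Definition _ (R : realType) m n :=
  Uniform_isComplete.Build (cmx R m n) (@cauchy_cvg 'M[R]_(m, n)).

Definition totf {T U : Type} (f : T -> U) : T -> U := f.
HB.instance Definition _ (T U : Type) (f : T -> U) :=
  isFun.Build T U setT setT (totf f) (fun _ _ => I).
Lemma fixpt (R : realType) n (G : cmx R n 1 -> cmx R n 1) (k : R) :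
  0 <= k -> k < 1 -> (forall x y, `|G x - G y| <= k * `|x - y|) -> exists x, x = G x.
Proof.
move=> k0 k1 HG.
have ctr : is_contraction (totf G : {fun [set: cmx R n 1] >-> [set: cmx R n 1]}).
  exists (NngNum k0); split => //.
  move=> [x y] _; exact: HG.
have [x _ Hx] := @banach_fixed_point R _ setT _ ctr closedT (ex_intro _ (0 : cmx R n 1) I).
by exists x.
Qed.

Lemma mxn_ge (R : realType) n (x : cmx R n 1) i : `|x i 0| <= `|x|.
Proof.
rewrite (_ : `|x| = mx_norm x)// mx_normrE.
exact: (le_bigmax _ (fun ij : 'I_n * 'I_1 => `|x ij.1 ij.2|) (i, 0)).
Qed.

Lemma mxn_le (R : realType) n (x : cmx R n 1) c : 0 <= c -> (forall i, `|x i 0| <= c) -> `|x| <= c.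
Proof.
move=> c0 H; rewrite (_ : `|x| = mx_norm x)// mx_normrE.
apply: bigmax_le => //= -[i j] _. by rewrite (ord1 j).
Qed.
Section N.
Variables (R : realType) (p : \bar R) (hp : (1 <= p)%E).

Lemma Ncases : p = +oo%E \/ exists2 r : R, 1 <= r & p = r%:E.
Proof.
move: hp; case: p => [r|_|//]; last by left.
by rewrite lee_fin => h; right; exists r.
Qed.

Lemma powR_inv_pow (r a : R) : 1 <= r -> 0 <= a -> (a `^ r) `^ r^-1 = a.
Proof.
move=> r1 a0; rewrite -powRrM mulfV ?powRr1 //.
by apply: lt0r_neq0; apply: lt_le_trans r1.
Qed.

Lemma N_ge0 n (x : 'cV[R]_n) : 0 <= vpnorm p x.
Proof.
case: Ncases => [->|[r r1 ->]] /=; last exact: powR_ge0.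
exact: bigmax_ge_id.
Qed.

Lemma N_coord n (x : 'cV[R]_n) i : `|x i 0| <= vpnorm p x.
Proof.
case: Ncases => [->|[r r1 ->]] /=.
  exact: (le_bigmax _ (fun i : 'I_n => `|x i 0|)).
rewrite -{1}(@powR_inv_pow r _ r1 (normr_ge0 (x i 0))).
apply: ge0_ler_powR.
- by rewrite invr_ge0 (le_trans _ r1).
- by rewrite nnegrE powR_ge0.
- by rewrite nnegrE sumr_ge0 // => j _; rewrite powR_ge0.
rewrite (bigD1 i) //= lerDl; apply: sumr_ge0 => j _; apply: powR_ge0.
Qed.


Lemma N_mono n (u v : 'cV[R]_n) :
  (forall i, `|u i 0| <= `|v i 0|) -> vpnorm p u <= vpnorm p v.
Proof.
move=> H; case: Ncases => [->|[r r1 ->]] /=.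
  by apply: le_bigmax2 => i _; exact: H.
have r0 : 0 <= r by apply: le_trans r1.
apply: ge0_ler_powR.
- by rewrite invr_ge0.
- by rewrite nnegrE sumr_ge0 // => j _; rewrite powR_ge0.
- by rewrite nnegrE sumr_ge0 // => j _; rewrite powR_ge0.
apply: ler_sum => i _; apply: ge0_ler_powR => //; rewrite ?nnegrE //.
Qed.

Lemma N_bound n (x : 'cV[R]_n) c : (0 < n)%N -> 0 <= c ->
  (forall i, `|x i 0| <= c) -> vpnorm p x <= n%:R * c.
Proof.
move=> n0 c0 H.
have c_le : c <= n%:R * c by rewrite ler_peMl // ler1n.
case: Ncases => [->|[r r1 ->]] /=.
  apply: bigmax_le => [|i _]; first by rewrite mulr_ge0.
  exact: le_trans (H i) c_le.
have r0 : 0 < r by apply: lt_le_trans r1.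
apply: (@le_trans _ _ ((c `^ r *+ n) `^ r^-1)).
  apply: ge0_ler_powR.
  - by rewrite invr_ge0 ltW.
  - by rewrite nnegrE sumr_ge0 // => j _; rewrite powR_ge0.
  - by rewrite nnegrE mulrn_wge0 // powR_ge0.
  rewrite -[n in _ *+ n]card_ord -sumr_const.
  apply: ler_sum => i _; apply: ge0_ler_powR => //; rewrite ?nnegrE ?ltW //.
rewrite -mulr_natl powRM ?powR_ge0 // (@powR_inv_pow r _ r1 c0).
rewrite ler_wpM2r // ler1_powR // ?ler1n //.
by rewrite invf_le1.
Qed.

Lemma N_pos n (x : 'cV[R]_n) : x != 0 -> 0 < vpnorm p x.
Proof.
move=> xn0.
have [i xi] : exists i, x i 0 != 0.
  apply/existsP; apply: contraNT xn0 => /existsPn H.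
  apply/eqP/matrixP => i j; rewrite (ord1 j) mxE; exact/eqP/negPn/H.
by apply: (lt_le_trans _ (N_coord _ x i)); rewrite normr_gt0.
Qed.

Lemma N0 n : (0 < n)%N -> vpnorm p (0 : 'cV[R]_n) = 0.
Proof.
move=> n0; apply/le_anti; rewrite N_ge0 andbT.
have := @N_bound n 0 0 n0 (lexx _); rewrite mulr0; apply => i.
by rewrite mxE normr0.
Qed.

Lemma op_prop n (M : 'M[R]_n) : (0 < n)%N ->
  0 <= opnorm p M /\ forall z, vpnorm p (M *m z) <= opnorm p M * vpnorm p z.
Proof.
move=> n0.
set L := \big[Num.max/0]_(ij : 'I_n * 'I_n) `|M ij.1 ij.2|.
have ML i j : `|M i j| <= L.
  exact: (le_bigmax _ (fun ij : 'I_n * 'I_n => `|M ij.1 ij.2|) (i, j)).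
have L0 : 0 <= L by apply: le_trans (ML (Ordinal n0) (Ordinal n0)).
have Cb z : vpnorm p (M *m z) <= n%:R * (n%:R * L) * vpnorm p z.
  rewrite -mulrA; apply: N_bound => //.
    by rewrite !mulr_ge0 ?N_ge0.
  move=> i; rewrite mxE; apply: le_trans (ler_norm_sum _ _ _) _.
  rewrite -[n in _ *+ n]card_ord -mulrA mulr_natl -sumr_const.
  apply: ler_sum => j _; rewrite normrM.
  by apply: ler_pM; rewrite ?normr_ge0 ?ML ?N_coord.
pose S := [set vpnorm p (M *m x) / vpnorm p x | x in [set x : 'cV[R]_n | x != 0]]%classic.
have opE : opnorm p M = sup S by [].
rewrite opE.
have ubS : has_ubound S.
  exists (n%:R * (n%:R * L)) => _ [x /= xn0 <-].
  by rewrite ler_pdivrMr ?N_pos.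
have key z : z != 0 -> vpnorm p (M *m z) <= sup S * vpnorm p z.
  move=> zn0; rewrite -ler_pdivrMr ?N_pos //.
  by apply: ub_le_sup => //; exists z.
split.
  pose z1 : 'cV[R]_n := const_mx 1.
  have z1n0 : z1 != 0.
    apply/eqP => /matrixP /(_ (Ordinal n0) 0); rewrite !mxE => /eqP.
    by rewrite oner_eq0.
  apply: le_trans (ub_le_sup ubS _); last by exists z1.
  by rewrite divr_ge0 ?N_ge0.
move=> z; have [->|zn0] := eqVneq z 0; last exact: key.
by rewrite mulmx0 N0 // mulr0.
Qed.

End N.

Lemma exk (R : realType) (q c : R) : 0 <= q -> q < 1 -> exists k, q ^+ k * c < 1.
Proof.
move=> q0 q1; have [c0|c0] := lerP c 0.
  by exists 0%N; rewrite expr0 mul1r; apply: le_lt_trans c0 _.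
have nq : `|q| < 1 by rewrite ger0_norm.
move: (cvg_expr nq) => /cvgrPdist_lt /(_ (c^-1)) [].
  by rewrite invr_gt0.
move=> N _ HN; exists N; have := HN N (leqnn N).
rewrite /= sub0r normrN ger0_norm ?exprn_ge0 // => h.
by rewrite -ltr_pdivlMr // div1r.
Qed.

Theorem corollary3p1 (R : realType) (m n : nat) (A B : 'M[R]_(m, n))
    (Adag : 'M[R]_(n, m)) (p : \bar R) :
  (m < n)%N ->
  (1 <= p)%E ->
  is_MP_inverse A Adag ->
  \rank A = m ->
  opnorm p (Adag *m B) < 1 ->
  forall b : 'cV[R]_m,
    (exists! x : 'cV[R]_n, x = Adag *m (B *m absv x + b)) /\
    (forall x : 'cV[R]_n, x = Adag *m (B *m absv x + b) ->
       A *m x - B *m absv x = b).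
Proof.
move=> mn p1 [h1 h2 h3 h4] rk qlt b.
have n0 : (0 < n)%N by apply: leq_ltn_trans mn.
split; last first.
  have [Br hBr] : exists Br : 'M[R]_(n, m), A *m Br = 1%:M.
    by apply/row_freeP; rewrite /row_free rk.
  have hAA : A *m Adag = 1%:M.
    by rewrite -[A *m Adag]mulmx1 -hBr mulmxA h1 hBr.
  move=> x hx; rewrite {1}hx mulmxA hAA mul1mx.
  by rewrite addrAC subrr add0r.
set M := Adag *m B.
set c := Adag *m b.
pose F (x : 'cV[R]_n) := M *m absv x + c.
have FE x : Adag *m (B *m absv x + b) = F x by rewrite mulmxDr mulmxA.
have [q0 Hq] := @op_prop R p p1 n M n0.
set q := opnorm p M in q0 Hq qlt.
have Lip x y : vpnorm p (F x - F y) <= q * vpnorm p (x - y).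
  have -> : F x - F y = M *m (absv x - absv y).
    by rewrite /F mulmxBr opprD addrACA subrr addr0.
  apply: le_trans (Hq _) _; rewrite ler_wpM2l //.
  apply: (@N_mono R p p1) => i; rewrite !mxE; exact: ler_dist_dist.
have LipK k x y : vpnorm p (iter k F x - iter k F y) <= q ^+ k * vpnorm p (x - y).
  elim: k => [|k IH]; first by rewrite expr0 mul1r.
  rewrite !iterS; apply: le_trans (Lip _ _) _.
  by rewrite exprS -mulrA ler_wpM2l.
have [k hk] := @exk R q n%:R q0 qlt.
pose G (x : cmx R n 1) : cmx R n 1 := iter k F x.
have GL (x y : cmx R n 1) : `|G x - G y| <= (q ^+ k * n%:R) * `|x - y|.
  apply: mxn_le; first by rewrite !mulr_ge0 ?exprn_ge0.
  move=> i; apply: le_trans (@N_coord R p p1 _ _ i) _.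
  apply: le_trans (LipK k x y) _.
  rewrite -mulrA ler_wpM2l ?exprn_ge0 //.
  by apply: N_bound => // j; exact: mxn_ge.
have Gu (a b' : cmx R n 1) : a = G a -> b' = G b' -> a = b'.
  move=> ha hb; apply/subr0_eq/normr0_eq0/eqP.
  rewrite eq_le normr_ge0 andbT.
  have := GL a b'; rewrite -ha -hb => H.
  have K0 : 0 <= q ^+ k * n%:R by rewrite mulr_ge0 ?exprn_ge0.
  have d0 := normr_ge0 (a - b').
  nra.
have [x0 hx0] := @fixpt R n G _ (mulr_ge0 (exprn_ge0 k q0) (ler0n _ n)) hk GL.
have Fx0 : F x0 = x0.
  apply: Gu => //.
  rewrite /G -iterSr iterS.
  by congr (F _); rewrite -/(G x0) -hx0.
exists x0; split; first by rewrite FE Fx0.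
move=> y; rewrite FE => hy.
apply: Gu => //; rewrite /G iter_fix //.
Qed.
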